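(* Let $p\ge1$, $n,K\in\mathbb{N}$, $\Omega\subseteq\mathbb{R}^d$ compact and $z\in\mathbb{R}^d\setminus\Omega$. Let $f:G_{\le n}(\Omega)\to\mathbb{R}^m$ be an MPNN with $K$ message passing layers whose aggregation functions $\phi^{(k)}$, combine functions $\psi^{(k)}$ and readout $\upsilon$ are jointly continuous in inputs and parameters, with parameters in compact sets. Let $\Omega_k$ ($0\le k\le K$, $\Omega_0=\Omega$) be the set of all attainable features after $k$ layers (over all graphs, nodes and parameters), and let $z_k\notin\Omega_k$. Assume that for all $1\le k\le K$: $\phi^{(k)}$ is uniformly Lipschitz w.r.t. the augmented Wasserstein distance $W_1^{(z_{k-1})}$ on multisets of at most $n$ elements of $\Omega_{k-1}$; $\psi^{(k)}$ is uniformly Lipschitz w.r.t. the metric $\|x-x'\|_p+\|c-c'\|_p$ on pairs; and $\upsilon$ is uniformly Lipschitz w.r.t. $W_1^{(z_K)}$ on multisets of at most $n$ elements of $\Omega_K$. Then there are constants $C_1,C_2>0$ such that for all parameter choices: (1) for every $0\le k\le K$ and all nodes $u,v$ of graphs in $G_{\le n}(\Omega)$, $\|x_v^{(k)}-x_u^{(k)}\|_p^p\le C_1\,TD^p(T_v^{(k)},T_u^{(k)})$; (2) for all $G,\hat G\in G_{\le n}(\Omega)$ with graph embeddings $c^{\mathrm{global}},\hat c^{\mathrm{global}}$, $\|c^{\mathrm{global}}-\hat c^{\mathrm{global}}\|_p^p\le C_2\,TMD^{(K)}(G,\hat G)^p$.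
   Context: $G_{\le n}(\Omega)$ is the set of graphs $G=(V,E,X)$ with $|V|\le n$ and node features $x_v\in\Omega$; $\mathcal N_v$ is the multiset of neighbors of $v$. An MPNN of depth $K$ computes $x_v^{(0)}=x_v$ and, for $k=1,\dots,K$, $c_v^{(k)}=\phi^{(k)}(\{\!\!\{ x_u^{(k-1)}:u\in\mathcal N_v\}\!\!\})$, $x_v^{(k)}=\psi^{(k)}(x_v^{(k-1)},c_v^{(k)})$, and graph embedding $c^{\mathrm{global}}=\upsilon(\{\!\!\{ x_v^{(K)}:v\in V\}\!\!\})$. For multisets of vectors of at most $n$ elements, $W_1^{(z)}(S_1,S_2)=\min_{\tau\in S_n}\sum_j\|s_j-s'_{\tau(j)}\|_1$ after padding both with copies of $z$ to $n$ elements. A parametric function is uniformly Lipschitz if it is $L$-Lipschitz in its input for every parameter with a common $L$. Computation trees: $T_v^{(0)}$ is a single root node with feature $x_v$; $T_v^{(k)}$ is obtained from $T_v^{(k-1)}$ by attaching to each leaf (corresponding to a graph node $u$) children corresponding to the neighbors of $u$, each with its feature. The blank tree $\bar T_z$ is a single node with feature $z$. For a rooted tree $T$ with root $r$, $\mathcal T_r$ is the multiset of subtrees rooted at the children of $r$. For multisets of trees $A,B$ of size at most $n$, $W^{(\bar T_z)}_{TD,1}(A,B)=\min_{\tau\in S_n}\sum_{j=1}^n TD(A'_j,B'_{\tau(j)})$ with $A',B'$ padded by copies of $\bar T_z$ to $n$ elements. $TD(T_a,T_b)=\|x_a-x_b\|_p+W^{(\bar T_z)}_{TD,1}(\mathcal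 T_a,\mathcal T_b)$ if the maximal depth of $T_a,T_b$ is positive and $\|x_a-x_b\|_p$ otherwise ($x_a,x_b$ root features). The Tree Mover's Distance is $TMD^{(K)}(G,H)=W^{(\bar T_z)}_{TD,1}(\{\!\!\{ T_v^{(K)}:v\in V_G\}\!\!\},\{\!\!\{ T_u^{(K)}:u\in V_H\}\!\!\})$. *)

(* Defs.v *)
From HB Require Import structures.
From mathcomp Require Import all_boot all_order all_algebra fingroup perm.
From mathcomp Require Import all_classical all_reals all_analysis.

Set Implicit Arguments.
Unset Strict Implicit.
Unset Printing Implicit Defensive.

Import Order.TTheory GRing.Theory Num.Theory.
Local Open Scope classical_set_scope.
Local Open Scope ring_scope.

Section Defs.
Variable R : realType.

Definition pnorm (p : R) (d : nat) (x : 'rV[R]_d) : R :=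
  (\sum_(i < d) `|x ord0 i| `^ p) `^ p^-1.

Definition norm1 (d : nat) (x : 'rV[R]_d) : R := \sum_(i < d) `|x ord0 i|.

(* For multisets (given as sequences) A, B of at most n elements of T, a cost
   c and a padding element z: pad both with copies of z up to n elements and
   take the minimum over tau in S_n of sum_j c (A'_j) (B'_(tau j)). *)
Definition Wpad (T : Type) (c : T -> T -> R) (n : nat) (z : T)
    (A B : seq T) : R :=
  let cost := fun tau : 'S_n => \sum_(j < n) c (nth z A j) (nth z B (tau j)) in
  \big[Num.min/cost 1%g]_(tau : 'S_n) cost tau.

Definition W1 (n d : nat) (z : 'rV[R]_d) (A B : seq 'rV[R]_d) : R :=
  Wpad (fun s s' => norm1 (s - s')) n z A B.

Record graph (d : nat) := Graph {
  gN : nat;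
  gadj : rel 'I_gN;
  gx : 'I_gN -> 'rV[R]_d }.

Definition nbrs d (G : graph d) (v : 'I_(gN G)) : seq 'I_(gN G) :=
  [seq u <- enum 'I_(gN G) | @gadj _ G v u].
Arguments nbrs {d} G v.

Definition in_Gn d (n : nat) (Omega : set 'rV[R]_d) (G : graph d) : Prop :=
  [/\ (gN G <= n)%N,
      (forall u v, @gadj _ G u v = @gadj _ G v u),
      (forall v, ~~ @gadj _ G v v) &
      (forall v, Omega (@gx _ G v))].

Inductive ftree (T : Type) : Type := FNode of T & seq (ftree T).

Definition froot T (t : ftree T) : T := let: FNode x _ := t in x.
Definition fchildren T (t : ftree T) : seq (ftree T) :=
  let: FNode _ ts := t in ts.

Fixpoint fmap T U (f : T -> U) (t : ftree T) : ftree U :=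
  let: FNode x ts := t in FNode (f x) (map (fmap f) ts).

Fixpoint depth T (t : ftree T) : nat :=
  let: FNode _ ts := t in foldr (fun t' m => maxn (depth t').+1 m) 0%N ts.

Fixpoint grow d (G : graph d) (t : ftree 'I_(gN G)) : ftree 'I_(gN G) :=
  let: FNode u ts := t in
  if ts is [::] then FNode u [seq FNode w [::] | w <- nbrs G u]
  else FNode u (map (@grow d G) ts).

Definition comp_tree d (G : graph d) (k : nat) (v : 'I_(gN G))
  : ftree 'rV[R]_d :=
  fmap (@gx _ G) (iter k (@grow d G) (FNode v [::])).

Section TD.
Variables (p : R) (n d : nat) (z : 'rV[R]_d).

Definition blank_tree : ftree 'rV[R]_d := FNode z [::].

(* TD computed with a fuel argument; the recursion in the definition of TD
   only descends to pairs of strictly smaller maximal depth (children or blank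
   trees), so fuel = maximal depth of the two trees is enough (see TD). *)
Fixpoint TD_fuel (fuel : nat) (ta tb : ftree 'rV[R]_d) : R :=
  match fuel with
  | 0%N => pnorm p (froot ta - froot tb)
  | m.+1 =>
    if (0 < maxn (depth ta) (depth tb))%N then
      pnorm p (froot ta - froot tb)
      + Wpad (TD_fuel m) n blank_tree (fchildren ta) (fchildren tb)
    else pnorm p (froot ta - froot tb)
  end.

Definition TD (ta tb : ftree 'rV[R]_d) : R :=
  TD_fuel (maxn (depth ta) (depth tb)) ta tb.

Definition WTD (A B : seq (ftree 'rV[R]_d)) : R := Wpad TD n blank_tree A B.

Definition TMD (K : nat) (G H : graph d) : R :=
  WTD [seq @comp_tree d G K v | v <- enum 'I_(gN G)]
      [seq @comp_tree d H K u | u <- enum 'I_(gN H)].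
End TD.

(* An MPNN of depth K with parameter vector theta in 'rV[R]_q:
   dims k  = dimension of the node features after k layers (dims 0 = d),
   dc k    = dimension of the aggregated messages c^{(k)} (k >= 1),
   phi k theta : multiset (seq) of features of layer k-1 -> R^{dc k},
   psi k theta : R^{dims (k-1)} * R^{dc k} -> R^{dims k},
   ups theta   : multiset of layer-K features -> R^m. *)
Section MPNN.
Variables (q m K : nat) (dims dc : nat -> nat).
Variable phi : forall k : nat, 'rV[R]_q -> seq 'rV[R]_(dims k.-1) -> 'rV[R]_(dc k).
Variable psi : forall k : nat,
  'rV[R]_q -> 'rV[R]_(dims k.-1) -> 'rV[R]_(dc k) -> 'rV[R]_(dims k).
Variable ups : 'rV[R]_q -> seq 'rV[R]_(dims K) -> 'rV[R]_m.

Definition feat (theta : 'rV[R]_q) (G : graph (dims 0))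
  : forall k : nat, 'I_(gN G) -> 'rV[R]_(dims k) :=
  fix f (k : nat) : 'I_(gN G) -> 'rV[R]_(dims k) :=
  match k as k0 return 'I_(gN G) -> 'rV[R]_(dims k0) with
  | 0%N => @gx _ G
  | k'.+1 => fun v =>
      @psi k'.+1 theta (f k' v)
        (@phi k'.+1 theta [seq f k' u | u <- nbrs G v])
  end.

Definition cglob (theta : 'rV[R]_q) (G : graph (dims 0)) : 'rV[R]_m :=
  ups theta [seq @feat theta G K v | v <- enum 'I_(gN G)].

Definition Omega_k (n : nat) (Omega : set 'rV[R]_(dims 0))
    (Theta : set 'rV[R]_q) (k : nat) : set 'rV[R]_(dims k) :=
  match k as k0 return set 'rV[R]_(dims k0) with
  | 0%N => Omega
  | k'.+1 => [set y | exists (theta : 'rV[R]_q) (G : graph (dims 0))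
                         (v : 'I_(gN G)),
               [/\ Theta theta, in_Gn n Omega G & @feat theta G k'.+1 v = y]]
  end.
End MPNN.

Definition rows_seq (j d : nat) (X : 'M[R]_(j, d)) : seq 'rV[R]_d :=
  [seq row i X | i <- enum 'I_j].

End Defs.

Arguments nbrs {R d} G v.
Arguments comp_tree {R d} G k v.
Arguments feat {R q dims dc} phi psi theta G k v.
Arguments Omega_k {R q dims dc} phi psi n Omega Theta k _.
Arguments cglob {R q m K dims dc} phi psi ups theta G.

(* Main.v *)
Require Import Defs.
From HB Require Import structures.
From mathcomp Require Import all_boot all_order all_algebra fingroup perm.
From mathcomp Require Import all_classical all_reals all_analysis.
From mathcomp Require Import ring lra.
Import Order.TTheory GRing.Theory Num.Theory numFieldNormedType.Exports.
Local Open Scope classical_set_scope.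
Local Open Scope ring_scope.

Set Implicit Arguments.
Unset Strict Implicit.
Unset Printing Implicit Defensive.

Local Notation norm1 := Defs.norm1.
Local Notation froot := Defs.froot.
Section Gen.
Variable R : realType.

Lemma pnorm_ge0 (p : R) d (x : 'rV[R]_d) : 0 <= pnorm p x.
Proof. exact: powR_ge0. Qed.

Lemma sum_entry_le d (F : 'I_d -> R) i : (forall j, 0 <= F j) -> F i <= \sum_j F j.
Proof.
move=> H; rewrite (bigD1 i) //= lerDl; exact: sumr_ge0.
Qed.

Lemma pnorm_entry (p : R) d (x : 'rV[R]_d) i : 0 < p -> `|x ord0 i| <= pnorm p x.
Proof.
move=> p0.
have -> : `|x ord0 i| = (`|x ord0 i| `^ p) `^ p^-1.
  by rewrite -powRrM mulfV ?gt_eqF // powRr1.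
apply: ge0_ler_powR.
- by rewrite invr_ge0 ltW.
- by rewrite nnegrE powR_ge0.
- by rewrite nnegrE sumr_ge0 // => j _; exact: powR_ge0.
apply: sum_entry_le => j; exact: powR_ge0.
Qed.

Lemma norm1_ge0 d (x : 'rV[R]_d) : 0 <= norm1 x.
Proof. by apply: sumr_ge0 => i _. Qed.

Lemma norm1_le_pnorm (p : R) d (x : 'rV[R]_d) : 0 < p -> norm1 x <= d%:R * pnorm p x.
Proof.
move=> p0; rewrite /norm1.
apply: le_trans (_ : \sum_(i < d) pnorm p x <= _).
  by apply: ler_sum => i _; exact: pnorm_entry.
by rewrite sumr_const card_ord mulr_natl.
Qed.

Lemma pnorm_le_norm1 (p : R) d (x : 'rV[R]_d) : 1 <= p -> pnorm p x <= (d%:R + 1) * norm1 x.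
Proof.
move=> p1; have p0 : 0 < p by exact: lt_le_trans p1.
set S := norm1 x.
have S0 : 0 <= S := norm1_ge0 x.
have ent : forall i, `|x ord0 i| <= S.
  by move=> i; apply: sum_entry_le.
rewrite /pnorm.
apply: le_trans (_ : ((d%:R + 1) * S `^ p) `^ p^-1 <= _).
  apply: ge0_ler_powR.
  - by rewrite invr_ge0 ltW.
  - by rewrite nnegrE; apply: sumr_ge0 => i _; exact: powR_ge0.
  - by rewrite nnegrE mulr_ge0 ?powR_ge0 // addr_ge0.
  apply: le_trans (_ : \sum_(i < d) S `^ p <= _).
    apply: ler_sum => i _; apply: ge0_ler_powR; rewrite ?nnegrE //; exact: ltW.
  rewrite sumr_const card_ord -(mulr_natl (S `^ p)); apply: ler_wpM2r; rewrite ?powR_ge0 //.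
  by rewrite lerDl.
rewrite powRM ?addr_ge0 ?powR_ge0 // -powRrM mulfV ?gt_eqF // powRr1 //.
rewrite ler_wpM2r //.
have d1 : 1 <= d%:R + 1 :> R by rewrite lerDr.
rewrite -{2}(powRr1 (ltW (lt_le_trans ltr01 d1))).
apply: ler_powR => //.
by rewrite invf_le1.
Qed.

Lemma norm1_sym d (x y : 'rV[R]_d) : norm1 (x - y) = norm1 (y - x).
Proof. by apply: eq_bigr => i _; rewrite !mxE distrC. Qed.

Lemma norm1_tri d (x y w : 'rV[R]_d) : norm1 (x - w) <= norm1 (x - y) + norm1 (y - w).
Proof.
rewrite /norm1 -big_split /=; apply: ler_sum => i _; rewrite !mxE.
exact: ler_distD.
Qed.

Lemma pnorm_sym (p : R) d (x y : 'rV[R]_d) : pnorm p (x - y) = pnorm p (y - x).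
Proof. by rewrite /pnorm; congr (_ `^ _); apply: eq_bigr => i _; rewrite !mxE distrC. Qed.

Lemma pnorm0 (p : R) d : 0 < p -> pnorm p (0 : 'rV[R]_d) = 0.
Proof.
move=> p0; rewrite /pnorm big1 ?powR0 ?invr_eq0 ?gt_eqF //.
by move=> i _; rewrite mxE normr0 powR0 // gt_eqF.
Qed.

Lemma norm1_0 d : norm1 (0 : 'rV[R]_d) = 0.
Proof. by rewrite /norm1 big1 // => i _; rewrite mxE normr0. Qed.


Section Wp.
Variables (T : Type) (n : nat).
Implicit Types (c : T -> T -> R) (z : T) (A B : seq T).

Definition wcost (c : T -> T -> R) (z : T) (A B : seq T) (tau : 'S_n) : R :=
  \sum_(j < n) c (nth z A j) (nth z B (tau j)).

Lemma WpadE c z A B : Wpad c n z A B = \big[Num.min/wcost c z A B 1%g]_(tau : 'S_n) wcost c z A B tau.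
Proof. by []. Qed.

Lemma W_le_cost c z A B tau : Wpad c n z A B <= wcost c z A B tau.
Proof. rewrite WpadE; exact: bigmin_le. Qed.

Lemma W_attain c z A B : exists tau, wcost c z A B tau <= Wpad c n z A B.
Proof.
case: (@Order.TotalTheory.arg_minP _ _ 'S_n 1%g xpredT (wcost c z A B)) => //= tau _ Ht.
exists tau; rewrite WpadE; apply/bigmin_geP; split; first exact: Ht.
by move=> i _; apply: Ht.
Qed.

Lemma W_ge0 c z A B : (forall a b, 0 <= c a b) -> 0 <= Wpad c n z A B.
Proof.
move=> H; have [tau Ht] := W_attain c z A B; apply: le_trans Ht.
by apply: sumr_ge0 => j _.
Qed.




End Wp.
Lemma W_compare (T1 T2 : Type) n (C : R) (c1 : T1 -> T1 -> R) (c2 : T2 -> T2 -> R) z1 z2 A1 B1 A2 B2 : 0 <= C ->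
  (forall j j' : 'I_n, c1 (nth z1 A1 j) (nth z1 B1 j') <= C * c2 (nth z2 A2 j) (nth z2 B2 j')) ->
  Wpad c1 n z1 A1 B1 <= C * Wpad c2 n z2 A2 B2.
Proof.
move=> C0 H; have [tau Ht] := W_attain n c2 z2 A2 B2.
apply: le_trans (W_le_cost c1 z1 A1 B1 tau) _.
apply: le_trans (_ : C * wcost c2 z2 A2 B2 tau <= _); last by rewrite ler_wpM2l.
rewrite /wcost mulr_sumr; apply: ler_sum => j _; exact: H.
Qed.

Lemma W_ext (T : Type) n (c1 c2 : T -> T -> R) (z : T) A B :
  (forall j j' : 'I_n, c1 (nth z A j) (nth z B j') = c2 (nth z A j) (nth z B j')) ->
  Wpad c1 n z A B = Wpad c2 n z A B.
Proof.
move=> H; apply/le_anti/andP; split; rewrite -[X in _ <= X]mul1r; apply: W_compare => // j j';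
  by rewrite mul1r H.
Qed.


Lemma depth_nth_lt T (x : T) ts b j : (j < size ts)%N ->
  (depth (nth b ts j) < depth (FNode x ts))%N.
Proof.
elim: ts j => //= a l IH [|j] /=; first by rewrite leq_max leqnn.
by move=> /IH /= H; rewrite leq_max H orbT.
Qed.

Lemma depth0 T (t : ftree T) : depth t = 0%N -> fchildren t = [::].
Proof. by case: t => x [|a l] //= /eqP; rewrite -leqn0 geq_max ltn0. Qed.

Lemma depth_nth T (t : ftree T) b j : depth b = 0%N ->
  (depth (nth b (fchildren t) j) <= (depth t).-1)%N.
Proof.
move=> b0; case: t => x ts /=.
case: (ltnP j (size ts)) => Hj; last by rewrite nth_default // b0.
have := depth_nth_lt x b Hj; rewrite /=.
by case: (foldr _ _ _).
Qed.

End Gen.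

Section TDl.
Variables (R : realType) (p : R) (n d : nat) (z : 'rV[R]_d).
Hypothesis p0 : 0 < p.
Local Notation TDf := (TD_fuel p n z).
Local Notation TD := (TD p n z).
Local Notation bl := (blank_tree z).

Lemma TD_fuel_ge0 f a b : 0 <= TDf f a b.
Proof.
elim: f a b => [|f IH] a b /=; first exact: pnorm_ge0.
case: ifP => _; last exact: pnorm_ge0.
by apply: addr_ge0; [exact: pnorm_ge0 | apply: W_ge0].
Qed.

Lemma TD_ge0 a b : 0 <= TD a b.
Proof. exact: TD_fuel_ge0. Qed.

Lemma depth_nth_bl (t : ftree 'rV[R]_d) j f :
  (depth t <= f.+1)%N -> (depth (nth bl (fchildren t) j) <= f)%N.
Proof.
move=> H; apply: leq_trans (@depth_nth _ t bl j (erefl _)) _.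
by case: (depth t) H.
Qed.

Lemma TD_fuel_irr f f' a b : (maxn (depth a) (depth b) <= f)%N ->
  (maxn (depth a) (depth b) <= f')%N -> TDf f a b = TDf f' a b.
Proof.
elim: f f' a b => [|f IH] [|f'] a b Hf Hf' //=.
- by rewrite ltnNge Hf.
- by rewrite ltnNge Hf'.
case: ifP => // _; congr (_ + _); apply: W_ext => j j'.
move: Hf Hf'; rewrite !geq_max => /andP [Ha Hb] /andP [Ha' Hb'].
by apply: IH; rewrite geq_max; apply/andP; split; apply: depth_nth_bl.
Qed.

Lemma TD_fuelE f a b : (maxn (depth a) (depth b) <= f)%N -> TDf f a b = TD a b.
Proof. by move=> H; apply: TD_fuel_irr. Qed.

Lemma TD_bl : TD bl bl = 0.
Proof. by rewrite /TD /= subrr pnorm0. Qed.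

Lemma W_nil : Wpad TD n bl [::] [::] = 0.
Proof.
apply/le_anti/andP; split; last by apply: W_ge0 => ??; exact: TD_ge0.
apply: le_trans (W_le_cost _ _ _ _ 1%g) _.
by rewrite /wcost big1 // => j _; rewrite !nth_nil TD_bl.
Qed.

Lemma TD_unfold a b : TD a b = pnorm p (froot a - froot b) +
   Wpad TD n bl (fchildren a) (fchildren b).
Proof.
rewrite {1}/TD; case E: (maxn (depth a) (depth b)) => [|m] /=.
  move/eqP: E; rewrite -leqn0 geq_max !leqn0 => /andP [/eqP /depth0 -> /eqP /depth0 ->].
  by rewrite W_nil addr0.
rewrite E /=; congr (_ + _); apply: W_ext => j j'.
move/eqP: E; rewrite eqn_leq geq_max => /andP [/andP [Ha Hb] _].
by apply: TD_fuelE; rewrite geq_max; apply/andP; split; apply: depth_nth_bl.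
Qed.

Lemma TD_root a b : pnorm p (froot a - froot b) <= TD a b.
Proof. by rewrite TD_unfold lerDl; apply: W_ge0 => ??; exact: TD_ge0. Qed.

Lemma W_le_TD a b : Wpad TD n bl (fchildren a) (fchildren b) <= TD a b.
Proof. by rewrite TD_unfold lerDr; exact: pnorm_ge0. Qed.
End TDl.

Section CT.
Variables (R : realType) (d : nat) (G : graph R d).

Lemma iter_grow_S k v : iter k.+1 (@grow R d G) (FNode v [::]) =
  FNode v [seq iter k (@grow R d G) (FNode w [::]) | w <- nbrs G v].
Proof.
elim: k => [|k IH] //; rewrite iterS IH.
case E: (nbrs G v) => [|a l] /=; first by rewrite E.
by rewrite -map_comp.
Qed.

Lemma comp_tree_root k v : froot (comp_tree G k v) = @gx _ _ G v.
Proof. by case: k => [|k] //; rewrite /comp_tree iter_grow_S. Qed.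

Lemma comp_tree_children k v :
  fchildren (comp_tree G k.+1 v) = [seq comp_tree G k w | w <- nbrs G v].
Proof. by rewrite /comp_tree iter_grow_S /= -map_comp. Qed.

Lemma comp_tree_iso k v : nbrs G v = [::] -> comp_tree G k v = FNode (@gx _ _ G v) [::].
Proof. by move=> H; case: k => [|k] //; rewrite /comp_tree iter_grow_S H. Qed.

Lemma size_nbrs v : (size (nbrs G v) <= gN G)%N.
Proof. by rewrite /nbrs size_filter (leq_trans (count_size _ _)) // size_enum_ord. Qed.
End CT.

Lemma nth_map2 (I T1 T2 : Type) (f : I -> T1) (g : I -> T2) z1 z2 (A : seq I) j :
  (exists a, nth z1 (map f A) j = f a /\ nth z2 (map g A) j = g a) \/
  (nth z1 (map f A) j = z1 /\ nth z2 (map g A) j = z2).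
Proof.
elim: A j => [|a A IH] [|j] /=; try by right.
  by left; exists a.
exact: IH.
Qed.

Lemma lin_absorb (R : realType) (X T a b delta : R) : 0 < delta -> delta <= T ->
  0 <= a -> 0 <= b -> X <= a * T + b -> X <= (a + b / delta) * T.
Proof.
move=> d0 dT a0 b0 H; apply: le_trans H _.
rewrite mulrDl lerD2l.
apply: le_trans (_ : b / delta * delta <= _).
  by rewrite divfK // gt_eqF.
by rewrite ler_wpM2l // divr_ge0 // ltW.
Qed.

Lemma entry_le_norm (R : realType) d (v : 'rV[R]_d) i : `|v ord0 i| <= `|v|.
Proof. by rewrite -[`|v|]/(mx_norm v) mx_normrE; exact: (le_bigmax _ (fun ij => `|v ij.1 ij.2|) (ord0, i)). Qed.

Lemma sep_delta (R : realType) (p : R) d (Om : set 'rV[R]_d) z : 0 < p ->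
  compact Om -> ~ Om z -> exists2 e, 0 < e & forall x, Om x -> e <= pnorm p (x - z).
Proof.
move=> p0 cO Hz.
have cl : closed Om := compact_closed (@norm_hausdorff _ _) cO.
have op : open (~` Om) := closed_openC cl.
have : nbhs z (~` Om) by apply: open_nbhs_nbhs; split.
move/nbhs_ballP => [e /= e0 He]; exists e => // x Ox.
have : ~ ball z e x by move/He.
rewrite mx_norm_ball /ball_ /= => /negP; rewrite -leNgt => H.
apply: le_trans H _; rewrite -[`|_|]/(mx_norm _) mx_normrE; apply/bigmax_leP; split; first exact: pnorm_ge0.
move=> [i j] _ /=; rewrite (ord1 i) !mxE distrC.
have := pnorm_entry (x - z) j p0; by rewrite !mxE.
Qed.

Lemma compact_bnd (R : realType) (V : normedModType R) (A : set V) : compact A ->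
  exists M : R, forall x, A x -> `|x| <= M.
Proof.
move=> /compact_bounded [M [_ HM]]; exists (M + 1) => x Ax.
by apply: (HM (M + 1)) => //; rewrite ltrDl.
Qed.

Lemma norm1_le_norm (R : realType) d (v : 'rV[R]_d) : norm1 v <= d%:R * `|v|.
Proof.
rewrite /Defs.norm1; apply: le_trans (_ : \sum_(i < d) `|v| <= _).
  by apply: ler_sum => i _; exact: entry_le_norm.
by rewrite sumr_const card_ord mulr_natl.
Qed.


Lemma ref_cmp (R : realType) (p : R) d (x w0 z0 : 'rV[R]_d) (W : R) : 1 <= p -> 0 <= W ->
  pnorm p (x - w0) + W <= (d%:R + 1) ^+ 2 * (pnorm p (x - z0) + W) + (d%:R + 1) * norm1 (z0 - w0).
Proof.
move=> p1 W0; have p0 : 0 < p by exact: lt_le_trans p1.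
have h1 := pnorm_le_norm1 (x - w0) p1.
have h2 : norm1 (x - w0) <= norm1 (x - z0) + norm1 (z0 - w0) := norm1_tri _ _ _.
have h3 := norm1_le_pnorm (x - z0) p0.
have D0 : 0 <= d%:R :> R by [].
have P0 := pnorm_ge0 p (x - z0).
have N0 := norm1_ge0 (z0 - w0).
have N1 := norm1_ge0 (x - z0).
set D := d%:R in h1 h3 D0 *.
set P := pnorm p (x - z0) in h3 P0 *.
set N := norm1 (z0 - w0) in h2 N0 *.
set N' := norm1 (x - z0) in h2 h3 N1 *.
set Q := pnorm p (x - w0) in h1 *.
set M := norm1 (x - w0) in h1 h2 *.
have hM : M <= D * P + N by lra.
have : Q <= (D + 1) * (D * P + N).
  apply: le_trans h1 _; apply: ler_wpM2l; lra.
nra.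
Qed.

Lemma pair_cont (T U V : topologicalType) (f : T -> U) (g : T -> V) x :
  {for x, continuous f} -> {for x, continuous g} -> {for x, continuous (fun y => (f y, g y))}.
Proof.
move=> hf hg.
exact: (@cvg_pair _ _ _ _ _ _ (nbhs_filter x) (nbhs_filter (f x)) (nbhs_filter (g x)) _ _ hf hg).
Qed.

Unset Implicit Arguments.
Section Main.
Variables (R : realType) (p : R) (n K q m : nat) (dims dc : nat -> nat)
  (Omega : set 'rV[R]_(dims 0%N)) (Theta : set 'rV[R]_q)
  (phi : forall k : nat, 'rV[R]_q -> seq 'rV[R]_(dims k.-1) -> 'rV[R]_(dc k))
  (psi : forall k : nat,
     'rV[R]_q -> 'rV[R]_(dims k.-1) -> 'rV[R]_(dc k) -> 'rV[R]_(dims k))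
  (ups : 'rV[R]_q -> seq 'rV[R]_(dims K) -> 'rV[R]_m)
  (zs : forall k : nat, 'rV[R]_(dims k)).
Hypothesis p1 : 1 <= p.
Hypothesis cOmega : compact Omega.
Hypothesis cTheta : compact Theta.
Hypothesis phi_cont : forall k : nat, (0 < k <= K)%N -> forall j : nat, (j <= n)%N ->
     continuous (fun x : 'rV[R]_q * 'M[R]_(j, dims k.-1) =>
                   phi k x.1 (rows_seq x.2)).
Hypothesis psi_cont : forall k : nat, (0 < k <= K)%N ->
     continuous (fun x : 'rV[R]_q * ('rV[R]_(dims k.-1) * 'rV[R]_(dc k)) =>
                   psi k x.1 x.2.1 x.2.2).

Local Notation feat := (feat phi psi).

Lemma feat_S th (G : graph R (dims 0)) k v : feat th G k.+1 v =
  psi k.+1 th (feat th G k v) (phi k.+1 th [seq feat th G k u | u <- nbrs G v]).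
Proof. by []. Qed.

Definition Gref (w0 : 'rV[R]_(dims 0)) : graph R (dims 0) :=
  @Graph R (dims 0) 1 (fun _ _ => false) (fun _ => w0).

Lemma nbrs_ref w0 (v : 'I_(gN (Gref w0))) : nbrs (Gref w0) v = [::].
Proof. by rewrite /nbrs; elim: (enum _). Qed.

Lemma rows_seq0 d (X : 'M[R]_(0, d)) : rows_seq X = [::].
Proof. by rewrite /rows_seq; have := size_enum_ord 0; case: (enum _). Qed.

Lemma ref_cont w0 k : (k <= K)%N ->
  continuous (fun th => feat th (Gref w0) k (ord0 : 'I_1)).
Proof.
elim: k => [|k IH] Hk; first exact: cst_continuous.
have -> : (fun th => feat th (Gref w0) k.+1 (ord0 : 'I_1)) =
   (fun x : 'rV[R]_q * ('rV[R]_(dims k.+1.-1) * 'rV[R]_(dc k.+1)) => psi k.+1 x.1 x.2.1 x.2.2) \o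
   (fun th => (th, (feat th (Gref w0) k (ord0 : 'I_1),
      (fun x : 'rV[R]_q * 'M[R]_(0, dims k.+1.-1) => phi k.+1 x.1 (rows_seq x.2)) (th, 0)))).
  by apply: funext => th; rewrite feat_S nbrs_ref /= rows_seq0.
move=> th; apply: continuous_comp; last exact: (@psi_cont k.+1 Hk).
have c1 : {for th, continuous (fun th : 'rV[R]_q => (th, (0 : 'M[R]_(0, dims k))))}.
  apply: pair_cont; [exact: cvg_id | exact: cst_continuous].
have c2 := continuous_comp c1 (@phi_cont k.+1 Hk 0 (leq0n n) (th, 0)).
have c3 := pair_cont (IH (ltnW Hk) th) c2.
apply: pair_cont; first exact: cvg_id.
exact: c3.
Qed.

Hypothesis zs_out : forall k : nat, (k <= K)%N -> ~ Omega_k phi psi n Omega Theta k (zs k).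
Hypothesis phi_lip : forall k : nat, (k < K)%N -> exists L : R, forall theta, Theta theta ->
     forall s t : seq 'rV[R]_(dims k),
       (size s <= n)%N -> (size t <= n)%N ->
       (forall x, x \in s -> Omega_k phi psi n Omega Theta k x) ->
       (forall x, x \in t -> Omega_k phi psi n Omega Theta k x) ->
       pnorm p (phi k.+1 theta s - phi k.+1 theta t) <= L * W1 n (zs k) s t.
Hypothesis psi_lip : forall k : nat, (0 < k <= K)%N -> exists L : R, forall theta, Theta theta ->
     forall x x' c c',
       pnorm p (psi k theta x c - psi k theta x' c')
         <= L * (pnorm p (x - x') + pnorm p (c - c')).

Local Notation TDz := (TD p n (zs 0%N)).
Local Notation bl := (blank_tree (zs 0%N)).
Local Notation Ok := (Omega_k phi psi n Omega Theta).

Lemma p0 : 0 < p.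
Proof. exact: lt_le_trans p1. Qed.

Lemma ref_bnd w0 k : (k <= K)%N -> exists2 M, 0 <= M & forall th, Theta th ->
  norm1 (feat th (Gref w0) k (ord0 : 'I_1) - zs k) <= M.
Proof.
move=> Hk.
have hc : {within Theta, continuous (fun th => feat th (Gref w0) k (ord0 : 'I_1))}.
  by apply: continuous_subspaceT; exact: ref_cont.
have cc := continuous_compact hc cTheta.
have [M0 HM0] := compact_bnd cc.
exists ((dims k)%:R * (`|M0| + `|zs k|)); first by rewrite mulr_ge0 // addr_ge0.
move=> th Hth; apply: le_trans (norm1_le_norm _) _; rewrite ler_wpM2l //.
apply: le_trans (ler_normB _ _) _; rewrite lerD2r.
apply: le_trans (ler_norm _); apply: HM0; by exists th.
Qed.

Lemma feat_in th (G : graph R (dims 0)) k v : Theta th -> in_Gn n Omega G -> Ok k (feat th G k v).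
Proof.
case: k => [|k] Hth HG; first by case: HG => _ _ _ H; exact: H.
by exists th, G, v; split.
Qed.

Definition ClA k (L : R) := forall th, Theta th -> forall G H : graph R (dims 0),
  in_Gn n Omega G -> in_Gn n Omega H -> forall (v : 'I_(gN G)) (u : 'I_(gN H)) j, (k <= j)%N ->
  pnorm p (feat th G k v - feat th H k u) <= L * TDz (comp_tree G j v) (comp_tree H j u).

Definition ClB k (B : R) := forall th, Theta th -> forall G : graph R (dims 0),
  in_Gn n Omega G -> forall (w : 'I_(gN G)) j, (k <= j)%N ->
  norm1 (feat th G k w - zs k) <= B * TDz (comp_tree G j w) bl /\
  norm1 (zs k - feat th G k w) <= B * TDz bl (comp_tree G j w).

Lemma le_mul_mono (a C X T : R) : X <= a * T -> a <= C -> 0 <= T -> X <= C * T.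
Proof. by move=> h aC T0; apply: le_trans h _; rewrite ler_wpM2r. Qed.

Lemma Wstep k L B th (G H : graph R (dims 0)) (A : seq 'I_(gN G)) (A' : seq 'I_(gN H)) j :
  0 <= L -> 0 <= B -> ClA k L -> ClB k B -> Theta th ->
  in_Gn n Omega G -> in_Gn n Omega H -> (k <= j)%N ->
  W1 n (zs k) (map (feat th G k) A) (map (feat th H k) A') <=
  ((dims k)%:R * L + B) * Wpad TDz n bl (map (comp_tree G j) A) (map (comp_tree H j) A').
Proof.
move=> L0 B0 hA hB Hth HG HH Hj.
have pp := p0.
rewrite /W1; apply: W_compare; first by rewrite addr_ge0 // mulr_ge0.
move=> j1 j2.
case: (nth_map2 (feat th G k) (comp_tree G j) (zs k) bl A j1) => [[a [-> ->]]|[-> ->]];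
case: (nth_map2 (feat th H k) (comp_tree H j) (zs k) bl A' j2) => [[b [-> ->]]|[-> ->]].
- apply: (@le_mul_mono ((dims k)%:R * L)); last exact: TD_ge0.
    apply: le_trans (norm1_le_pnorm _ pp) _; rewrite -mulrA ler_wpM2l //.
    exact: hA.
  by rewrite lerDl.
- have [h _] := hB th Hth G HG a j Hj.
  apply: le_mul_mono h _ (TD_ge0 _ _ _ _ _); by rewrite lerDr mulr_ge0.
- have [_ h] := hB th Hth H HH b j Hj.
  apply: le_mul_mono h _ (TD_ge0 _ _ _ _ _); by rewrite lerDr mulr_ge0.
- rewrite subrr norm1_0 mulr_ge0 ?addr_ge0 ?mulr_ge0 //; exact: TD_ge0.
Qed.

Lemma claimA0 : ClA 0 1.
Proof.
move=> th Hth G H HG HH v u j _; rewrite mul1r /=.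
have := TD_root n (zs 0%N) p0 (comp_tree G j v) (comp_tree H j u).
by rewrite !comp_tree_root.
Qed.

Lemma ClA_mono k L L' : ClA k L -> L <= L' -> ClA k L'.
Proof.
move=> h LL th Hth G H HG HH v u j Hj; apply: le_trans (h th Hth G H HG HH v u j Hj) _.
by rewrite ler_wpM2r // TD_ge0.
Qed.

Lemma in_map_Ok th (G : graph R (dims 0)) k (A : seq 'I_(gN G)) : Theta th -> in_Gn n Omega G ->
  forall x, x \in map (feat th G k) A -> Ok k x.
Proof. by move=> Hth HG x /mapP [u _ ->]; exact: feat_in. Qed.

Lemma size_nbrs_n (G : graph R (dims 0)) v : in_Gn n Omega G -> (size (map (fun x => x) (nbrs G v)) <= n)%N.
Proof. by case=> Hn _ _ _; rewrite map_id (leq_trans (size_nbrs v)). Qed.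

Lemma claimA_S k L B : (k < K)%N -> 0 <= L -> 0 <= B -> ClA k L -> ClB k B ->
  exists2 L', 0 <= L' & ClA k.+1 L'.
Proof.
move=> Hk L0 B0 hA hB.
have [Lf hf] := phi_lip k Hk.
have [Lp hp] := psi_lip k.+1 Hk.
set C := (dims k)%:R * L + B.
have C0 : 0 <= C by rewrite addr_ge0 // mulr_ge0.
exists (`|Lp| * (L + `|Lf| * C)); first by rewrite mulr_ge0 // addr_ge0 // mulr_ge0.
move=> th Hth G H HG HH v u [|j] Hj //.
rewrite !feat_S.
set T := TDz (comp_tree G j.+1 v) (comp_tree H j.+1 u).
have T0 : 0 <= T by exact: TD_ge0.
apply: le_trans (hp th Hth _ _ _ _) _.
set S := _ + _.
have S0 : 0 <= S by rewrite addr_ge0 // pnorm_ge0.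
apply: le_trans (_ : `|Lp| * S <= _); first by rewrite ler_wpM2r // real_ler_norm ?num_real.
rewrite -mulrA ler_wpM2l // mulrDl /S; apply: lerD.
  by apply: hA => //; rewrite ltnW.
have sG : (size [seq feat th G k u0 | u0 <- nbrs G v] <= n)%N.
  by rewrite size_map; case: HG => Hn _ _ _; exact: leq_trans (size_nbrs v) Hn.
have sH : (size [seq feat th H k u0 | u0 <- nbrs H u] <= n)%N.
  by rewrite size_map; case: HH => Hn _ _ _; exact: leq_trans (size_nbrs u) Hn.
apply: le_trans (hf th Hth _ _ sG sH (in_map_Ok th G k _ Hth HG) (in_map_Ok th H k _ Hth HH)) _.
set W := W1 _ _ _ _.
have W0 : 0 <= W by apply: W_ge0 => ??; exact: norm1_ge0.
apply: le_trans (_ : `|Lf| * W <= _); first by rewrite ler_wpM2r // real_ler_norm ?num_real.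
rewrite -mulrA ler_wpM2l //.
apply: le_trans (Wstep k L B th G H (nbrs G v) (nbrs H u) j L0 B0 hA hB Hth HG HH _) _; first by [].
rewrite ler_wpM2l // -!comp_tree_children.
exact: W_le_TD p0 _ _.
Qed.

Lemma claimBC k L : (k <= K)%N -> 0 <= L -> ClA k L -> exists2 B, 0 <= B & ClB k B.
Proof.
move=> Hk L0 hA.
case: (pselect (exists w0, Omega w0 /\ (0 < n)%N)) => [[w0 [Hw0 Hn]]|Hno]; last first.
  exists 0 => // th Hth G HG w j Hj; exfalso; apply: Hno; exists (gx w).
  case: HG => HGn _ _ HO; split; first exact: HO.
  exact: leq_trans (leq_ltn_trans (leq0n w) (ltn_ord w)) HGn.
have zO : ~ Omega (zs 0%N) := zs_out 0 (leq0n K).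
have [del del0 Hdel] := sep_delta p0 cOmega zO.
have [M M0 HM] := ref_bnd w0 k Hk.
have Gin : in_Gn n Omega (Gref w0) by split.
set d0 := (dims 0)%:R : R.
set N0 := norm1 (zs 0%N - w0).
set dk := (dims k)%:R : R.
have N00 : 0 <= N0 := norm1_ge0 _.
set a := dk * L * (d0 + 1) ^+ 2.
set b := dk * L * ((d0 + 1) * N0) + M.
have a0 : 0 <= a by rewrite /a !mulr_ge0 // ?exprn_ge0 // addr_ge0.
have b0 : 0 <= b by rewrite /b addr_ge0 // !mulr_ge0 // addr_ge0.
exists (a + b / del); first by rewrite addr_ge0 // divr_ge0 // ltW.
move=> th Hth G HG w j Hj.
have tref : comp_tree (Gref w0) j (ord0 : 'I_1) = FNode w0 [::].
  by rewrite (@comp_tree_iso _ _ (Gref w0) j (ord0 : 'I_1) (nbrs_ref w0 _)).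
have Hx : Omega (gx w) by case: HG => _ _ _; apply.
have Tlow : del <= TDz (comp_tree G j w) bl.
  apply: le_trans (Hdel _ Hx) _.
  by have := TD_root n (zs 0%N) p0 (comp_tree G j w) bl; rewrite comp_tree_root.
have Tlow' : del <= TDz bl (comp_tree G j w).
  apply: le_trans (Hdel _ Hx) _; rewrite pnorm_sym.
  by have := TD_root n (zs 0%N) p0 bl (comp_tree G j w); rewrite comp_tree_root.
set x := feat th G k w.
set r := feat th (Gref w0) k (ord0 : 'I_1).
have HMr : norm1 (r - zs k) <= M := HM th Hth.
have dk0 : 0 <= dk by [].
have fin : forall X U T, 0 <= U -> X <= dk * (L * U) + M -> U <= (d0 + 1) ^+ 2 * T + (d0 + 1) * N0 ->
    X <= a * T + b.
  move=> X U T U0 h1 h2; apply: le_trans h1 _.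
  apply: le_trans (_ : dk * (L * ((d0 + 1) ^+ 2 * T + (d0 + 1) * N0)) + M <= _).
    by rewrite lerD2r ler_wpM2l // ler_wpM2l.
  by rewrite /a /b le_eqVlt; apply/orP; left; apply/eqP; ring.
split.
- apply: lin_absorb Tlow a0 b0 _; first exact: del0.
  apply: (fin _ (TDz (comp_tree G j w) (comp_tree (Gref w0) j (ord0 : 'I_1)))).
  + exact: TD_ge0.
  + apply: le_trans (norm1_tri _ r _) _; apply: lerD HMr.
    apply: le_trans (norm1_le_pnorm _ p0) _; rewrite ler_wpM2l //.
    exact: (hA th Hth G (Gref w0) HG Gin w ord0 j Hj).
  + rewrite tref !(TD_unfold n (zs 0%N) p0) comp_tree_root /=.
    apply: ref_cmp p1 _; apply: W_ge0 => ??; exact: TD_ge0.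
- apply: lin_absorb Tlow' a0 b0 _; first exact: del0.
  apply: (fin _ (TDz (comp_tree (Gref w0) j (ord0 : 'I_1)) (comp_tree G j w))).
  + exact: TD_ge0.
  + apply: le_trans (norm1_tri _ r _) _; rewrite addrC [norm1 (zs k - r)]norm1_sym; apply: lerD HMr.
    apply: le_trans (norm1_le_pnorm _ p0) _; rewrite ler_wpM2l //.
    exact: (hA th Hth (Gref w0) G Gin HG ord0 w j Hj).
  + rewrite tref !(TD_unfold n (zs 0%N) p0) comp_tree_root /= pnorm_sym [pnorm p (zs 0%N - _)]pnorm_sym.
    apply: ref_cmp p1 _; apply: W_ge0 => ??; exact: TD_ge0.
Qed.

Hypothesis ups_lip : exists L : R, forall theta, Theta theta ->
     forall s t : seq 'rV[R]_(dims K),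
       (size s <= n)%N -> (size t <= n)%N ->
       (forall x, x \in s -> Omega_k phi psi n Omega Theta K x) ->
       (forall x, x \in t -> Omega_k phi psi n Omega Theta K x) ->
       pnorm p (ups theta s - ups theta t) <= L * W1 n (zs K) s t.

Lemma claim k : (k <= K)%N -> exists2 L, 0 <= L & ClA k L.
Proof.
elim: k => [|k IH] Hk; first by exists 1 => //; exact: claimA0.
have [L L0 hA] := IH (ltnW Hk).
have [B B0 hB] := claimBC k L (ltnW Hk) L0 hA.
exact: claimA_S k L B Hk L0 B0 hA hB.
Qed.

Lemma claim_unif K' : (K' <= K)%N -> exists2 L, 0 <= L & forall k, (k <= K')%N -> ClA k L.
Proof.
elim: K' => [|K' IH] HK.
  have [L L0 h] := claim 0 HK; exists L => // k; rewrite leqn0 => /eqP ->; exact: h.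
have [L L0 h] := IH (ltnW HK).
have [L' L'0 h'] := claim K'.+1 HK.
exists (Num.max L L'); first by rewrite le_max L0.
move=> k; rewrite leq_eqVlt => /orP [/eqP -> | Hk].
  by apply: ClA_mono h' _; rewrite le_max lexx orbT.
by apply: ClA_mono (h k _) _; rewrite ?le_max ?lexx // -ltnS.
Qed.

Lemma pow_bnd (X T c : R) : 0 <= X -> 0 <= T -> 0 <= c -> X <= c * T ->
  X `^ p <= (c + 1) `^ p * T `^ p.
Proof.
move=> X0 T0 c0 H; rewrite -powRM ?addr_ge0 //.
apply: ge0_ler_powR; rewrite ?nnegrE ?(ltW p0) ?mulr_ge0 ?addr_ge0 //.
apply: le_trans H _; rewrite ler_wpM2r // lerDl //.
Qed.

Lemma main_sec : exists C1 C2 : R, [/\ 0 < C1, 0 < C2 &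
    forall theta, Theta theta ->
    (forall k : nat, (k <= K)%N ->
       forall G H : graph R (dims 0%N), in_Gn n Omega G -> in_Gn n Omega H ->
       forall (v : 'I_(gN G)) (u : 'I_(gN H)),
         pnorm p (feat theta G k v - feat theta H k u) `^ p
           <= C1 * TD p n (zs 0%N) (comp_tree G k v) (comp_tree H k u) `^ p)
    /\
    (forall G H : graph R (dims 0%N), in_Gn n Omega G -> in_Gn n Omega H ->
       pnorm p (cglob phi psi ups theta G - cglob phi psi ups theta H) `^ p
         <= C2 * TMD p n (zs 0%N) K G H `^ p)].
Proof.
have [L L0 hL] := claim_unif K (leqnn K).
have [LK LK0 hK] := claim K (leqnn K).
have [BK BK0 hBK] := claimBC K LK (leqnn K) LK0 hK.
have [Lu hu] := ups_lip.
set C := (dims K)%:R * LK + BK.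
have C0 : 0 <= C by rewrite addr_ge0 // mulr_ge0.
exists ((L + 1) `^ p), ((`|Lu| * C + 1) `^ p); split.
- by apply: powR_gt0; rewrite ltr_wpDl.
- by apply: powR_gt0; rewrite ltr_wpDl // mulr_ge0.
move=> th Hth; split.
  move=> k Hk G H HG HH v u; apply: pow_bnd => //; [exact: pnorm_ge0 | exact: TD_ge0 |].
  exact: (hL k Hk th Hth G H HG HH v u k (leqnn k)).
move=> G H HG HH; rewrite /cglob.
have sG : (size [seq feat th G K v | v <- enum 'I_(gN G)] <= n)%N.
  by rewrite size_map size_enum_ord; case: HG.
have sH : (size [seq feat th H K v | v <- enum 'I_(gN H)] <= n)%N.
  by rewrite size_map size_enum_ord; case: HH.
apply: pow_bnd; [exact: pnorm_ge0 | by apply: W_ge0 => ??; exact: TD_ge0 | by rewrite mulr_ge0 |].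
apply: le_trans (hu th Hth _ _ sG sH (in_map_Ok th G K _ Hth HG) (in_map_Ok th H K _ Hth HH)) _.
set W := W1 _ _ _ _.
have W0 : 0 <= W by apply: W_ge0 => ??; exact: norm1_ge0.
apply: le_trans (_ : `|Lu| * W <= _); first by rewrite ler_wpM2r // real_ler_norm ?num_real.
rewrite -mulrA ler_wpM2l //.
exact: (Wstep K LK BK th G H (enum _) (enum _) K LK0 BK0 hK hBK Hth HG HH (leqnn K)).
Qed.
End Main.

Theorem mainTheorem12 (R : realType) (p : R) (n K q m : nat)
  (dims dc : nat -> nat)
  (Omega : set 'rV[R]_(dims 0%N)) (Theta : set 'rV[R]_q)
  (phi : forall k : nat, 'rV[R]_q -> seq 'rV[R]_(dims k.-1) -> 'rV[R]_(dc k))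
  (psi : forall k : nat,
     'rV[R]_q -> 'rV[R]_(dims k.-1) -> 'rV[R]_(dc k) -> 'rV[R]_(dims k))
  (ups : 'rV[R]_q -> seq 'rV[R]_(dims K) -> 'rV[R]_m)
  (zs : forall k : nat, 'rV[R]_(dims k)) :
  1 <= p ->
  compact Omega ->
  compact Theta ->
  (* aggregation and readout are functions of multisets *)
  (forall k theta s t, perm_eq s t -> phi k theta s = phi k theta t) ->
  (forall theta s t, perm_eq s t -> ups theta s = ups theta t) ->
  (* joint continuity in inputs and parameters *)
  (forall k : nat, (0 < k <= K)%N -> forall j : nat, (j <= n)%N ->
     continuous (fun x : 'rV[R]_q * 'M[R]_(j, dims k.-1) =>
                   phi k x.1 (rows_seq x.2))) ->
  (forall k : nat, (0 < k <= K)%N ->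
     continuous (fun x : 'rV[R]_q * ('rV[R]_(dims k.-1) * 'rV[R]_(dc k)) =>
                   psi k x.1 x.2.1 x.2.2)) ->
  (forall j : nat, (j <= n)%N ->
     continuous (fun x : 'rV[R]_q * 'M[R]_(j, dims K) =>
                   ups x.1 (rows_seq x.2))) ->
  (* z = z_0 not in Omega = Omega_0, and z_k not in Omega_k *)
  (forall k : nat, (k <= K)%N -> ~ Omega_k phi psi n Omega Theta k (zs k)) ->
  (* phi^(k+1) uniformly Lipschitz w.r.t. W_1^(z_k) on multisets of at most
     n elements of Omega_k *)
  (forall k : nat, (k < K)%N -> exists L : R, forall theta, Theta theta ->
     forall s t : seq 'rV[R]_(dims k),
       (size s <= n)%N -> (size t <= n)%N ->
       (forall x, x \in s -> Omega_k phi psi n Omega Theta k x) ->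
       (forall x, x \in t -> Omega_k phi psi n Omega Theta k x) ->
       pnorm p (phi k.+1 theta s - phi k.+1 theta t) <= L * W1 n (zs k) s t) ->
  (* psi^(k) uniformly Lipschitz w.r.t. ||x - x'||_p + ||c - c'||_p *)
  (forall k : nat, (0 < k <= K)%N -> exists L : R, forall theta, Theta theta ->
     forall x x' c c',
       pnorm p (psi k theta x c - psi k theta x' c')
         <= L * (pnorm p (x - x') + pnorm p (c - c'))) ->
  (* readout uniformly Lipschitz w.r.t. W_1^(z_K) *)
  (exists L : R, forall theta, Theta theta ->
     forall s t : seq 'rV[R]_(dims K),
       (size s <= n)%N -> (size t <= n)%N ->
       (forall x, x \in s -> Omega_k phi psi n Omega Theta K x) ->
       (forall x, x \in t -> Omega_k phi psi n Omega Theta K x) ->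
       pnorm p (ups theta s - ups theta t) <= L * W1 n (zs K) s t) ->
  exists C1 C2 : R, [/\ 0 < C1, 0 < C2 &
    forall theta, Theta theta ->
    (forall k : nat, (k <= K)%N ->
       forall G H : graph R (dims 0%N), in_Gn n Omega G -> in_Gn n Omega H ->
       forall (v : 'I_(gN G)) (u : 'I_(gN H)),
         pnorm p (feat phi psi theta G k v - feat phi psi theta H k u) `^ p
           <= C1 * TD p n (zs 0%N) (comp_tree G k v) (comp_tree H k u) `^ p)
    /\
    (forall G H : graph R (dims 0%N), in_Gn n Omega G -> in_Gn n Omega H ->
       pnorm p (cglob phi psi ups theta G - cglob phi psi ups theta H) `^ p
         <= C2 * TMD p n (zs 0%N) K G H `^ p)].
Proof.
move=> H1 H2 H3 _ _ H4 H5 H6 H7 H8 H9 H10.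
eapply main_sec; eassumption.
Qed.
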